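(* Let $\pi_0$ be a portfolio map generated by $\Phi_0$, and let $p_0\in\Delta_n$ be a point at which $\Phi_0$ is differentiable. For every $\epsilon>0$ and every compact neighborhood $K$ of $p_0$ in $\Delta_n$, there exists $\delta>0$ such that whenever $\pi$ is a portfolio map generated by $\Phi$ with $\max_{p\in K}|\Phi(p)-\Phi_0(p)|<\delta$, we have $\sup_{p\in\Delta_n:|p-p_0|<\delta}|\pi(p)-\pi_0(p_0)|<\epsilon$.
   Context: $\Delta_n=\{p\in(0,1)^n:\sum p_i=1\}$, $\overline{\Delta}_n$ its closure, $n\ge2$; $|\cdot|$ is the Euclidean norm. A map $\pi:\Delta_n\to\overline{\Delta}_n$ is generated by a concave function $\Phi:\Delta_n\to(0,\infty)$ if $\sum_i\pi_i(p)\frac{q_i}{p_i}\ge\frac{\Phi(q)}{\Phi(p)}$ for all $p,q\in\Delta_n$. *)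

(* Defs.v *)
(* Points of R^n are row vectors 'rV[R]_n (coordinates p 0 i), which carry
   MathComp-Analysis' (product) topology, so [compact] is the library notion. *)
From HB Require Import structures.
From mathcomp Require Import all_boot all_order all_algebra.
From mathcomp Require Import all_classical all_reals all_analysis.
Set Implicit Arguments. Unset Strict Implicit. Unset Printing Implicit Defensive.
Import Order.TTheory GRing.Theory Num.Theory.
Import numFieldTopology.Exports numFieldNormedType.Exports.
Local Open Scope ring_scope.
Local Open Scope classical_set_scope.

Section Defs.
Variables (R : realType) (n : nat).

Definition simplex : set 'rV[R]_n :=
  [set p | (forall i, 0 < p 0 i < 1) /\ \sum_(i < n) p 0 i = 1].

Definition csimplex : set 'rV[R]_n :=
  [set p | (forall i, 0 <= p 0 i <= 1) /\ \sum_(i < n) p 0 i = 1].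

Definition enorm (v : 'rV[R]_n) : R := Num.sqrt (\sum_(i < n) (v 0 i) ^+ 2).

Definition concave_on_simplex (Phi : 'rV[R]_n -> R) : Prop :=
  forall p q t, simplex p -> simplex q -> 0 <= t <= 1 ->
    (1 - t) * Phi p + t * Phi q <= Phi ((1 - t) *: p + t *: q).

Definition generated_by (pi : 'rV[R]_n -> 'rV[R]_n) (Phi : 'rV[R]_n -> R) : Prop :=
  [/\ forall p, simplex p -> 0 < Phi p,
      concave_on_simplex Phi,
      forall p, simplex p -> csimplex (pi p)
    & forall p q, simplex p -> simplex q ->
        Phi q / Phi p <= \sum_(i < n) pi p 0 i * (q 0 i / p 0 i)].

(* Phi (defined on Delta_n) is differentiable at p0 in Delta_n, i.e. (Frechet)
   differentiable along the affine hyperplane containing Delta_n: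
   there is a linear form v |-> sum g_i v_i with
   Phi q = Phi p0 + <g, q - p0> + o(|q - p0|) as q -> p0, q in Delta_n. *)
Definition differentiable_on_simplex_at (Phi : 'rV[R]_n -> R) (p0 : 'rV[R]_n) : Prop :=
  exists g : 'rV[R]_n, forall e : R, 0 < e -> exists d : R, 0 < d /\
    forall q, simplex q -> enorm (q - p0) < d ->
      `|Phi q - Phi p0 - \sum_(i < n) g 0 i * (q 0 i - p0 0 i)| <= e * enorm (q - p0).

Definition compact_nbhs_in_simplex (K : set 'rV[R]_n) (p0 : 'rV[R]_n) : Prop :=
  [/\ K `<=` simplex, compact K
    & exists r : R, 0 < r /\ forall q, simplex q -> enorm (q - p0) < r -> K q].

End Defs.

(* Main.v *)
Require Import Defs.
From HB Require Import structures.
From mathcomp Require Import all_boot all_order all_algebra.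
From mathcomp Require Import all_classical all_reals all_analysis.
From mathcomp Require Import ring lra.
Import Order.TTheory GRing.Theory Num.Theory.
Import numFieldTopology.Exports numFieldNormedType.Exports.
Local Open Scope ring_scope.
Local Open Scope classical_set_scope.

Section H.
Context {R : realType} {n : nat}.
Implicit Types (x : 'rV[R]_n).

Lemma comp_le_enorm x i : `|x 0 i| <= enorm x.
Proof.
rewrite /enorm -(sqrtr_sqr (x 0 i)) ler_sqrt; last first.
  by apply: sumr_ge0 => k _; rewrite sqr_ge0.
by rewrite (bigD1 i) //= lerDl; apply: sumr_ge0 => k _; rewrite sqr_ge0.
Qed.

Lemma enorm_le x M : 0 <= M -> (forall i, `|x 0 i| <= M) ->
  enorm x <= Num.sqrt n%:R * M.
Proof.
move=> M0 H; rewrite /enorm -(ger0_norm M0) -sqrtr_sqr -sqrtrM ?ler0n //.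
rewrite ler_sqrt; last by rewrite mulr_ge0 ?ler0n ?sqr_ge0.
idtac.
have -> : n%:R * M ^+ 2 = \sum_(i < n) M ^+ 2 :> R.
  by rewrite sumr_const card_ord mulr_natl.
apply: ler_sum => i _; rewrite -real_normK ?num_real //.
by rewrite lerXn2r ?nnegrE ?normr_ge0.
Qed.


Definition dv (i j : 'I_n) : 'rV[R]_n := \row_k ((k == i)%:R - (k == j)%:R).

Lemma sum_delta (w : 'I_n -> R) i : \sum_k w k * (k == i)%:R = w i.
Proof.
rewrite (bigD1 i) //= eqxx mulr1 big1 ?addr0 //.
by move=> k /negbTE ->; rewrite mulr0.
Qed.

Lemma sum_dv (w : 'I_n -> R) i j : \sum_k w k * dv i j 0 k = w i - w j.
Proof.
under eq_bigr do rewrite mxE mulrBr.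
by rewrite sumrB !sum_delta.
Qed.

Lemma sum_shift (w : 'I_n -> R) (p0 : 'rV[R]_n) c i j :
  \sum_k w k * (p0 + c *: dv i j) 0 k = \sum_k w k * p0 0 k + c * (w i - w j).
Proof.
under eq_bigr do rewrite mxE [X in _ * (_ + X)]mxE mulrDr mulrCA.
by rewrite big_split /= -mulr_sumr sum_dv.
Qed.

Lemma dv_bound i j k : `|dv i j 0 k| <= 1.
Proof.
rewrite mxE; case: (k == i); case: (k == j) => /=;
  rewrite ?subrr ?normr0 ?subr0 ?sub0r ?normrN ?normr1 //.
Qed.

Lemma q_simplex (p0 : 'rV[R]_n) m t s i j : simplex p0 ->
  (forall k, m <= p0 0 k /\ m <= 1 - p0 0 k) -> 0 < t -> t < m -> `|s| = 1 ->
  simplex (p0 + (s*t) *: dv i j) /\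
  enorm ((p0 + (s*t) *: dv i j) - p0) <= Num.sqrt n%:R * t.
Proof.
move=> [hp hs] hm t0 tm s1.
have hc k : `|(p0 + (s*t) *: dv i j) 0 k - p0 0 k| <= t.
  have := dv_bound i j k; rewrite mxE => h.
  rewrite !mxE addrC addKr !normrM s1 mul1r ger0_norm ?(ltW t0) //.
  by rewrite -[X in _ <= X]mulr1 ler_wpM2l ?(ltW t0).
split; last first.
  apply: enorm_le; first exact: ltW.
  by move=> k; have := hc k; rewrite !mxE.
split.
  move=> k; have := hc k; rewrite ler_norml => /andP[h1 h2].
  have [h3 h4] := hm k.
  apply/andP; split; lra.
have := sum_shift (fun _ => 1) p0 (s * t) i j.
rewrite subrr mulr0 addr0.
under eq_bigr do rewrite mul1r.
move=> ->; under eq_bigr do rewrite mul1r; exact: hs.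
Qed.


Lemma squeeze (h : 'rV[R]_n -> R) (p0 g : 'rV[R]_n) e d m t c eta i j :
  simplex p0 -> (forall k, m <= p0 0 k /\ m <= 1 - p0 0 k) -> 0 < t -> t < m ->
  Num.sqrt n%:R * t < d -> 0 <= e ->
  (forall q, simplex q -> enorm (q - p0) < d ->
    `|h q - h p0 - \sum_k g 0 k * (q 0 k - p0 0 k)| <= e * enorm (q - p0)) ->
  (forall s, `|s| = 1 -> h (p0 + (s*t) *: dv i j) - h p0 <= s * t * c + eta) ->
  `|c - (g 0 i - g 0 j)| <= eta / t + e * Num.sqrt n%:R.
Proof.
move=> hp0 hm t0 tm td e0 hd hs.
set N := Num.sqrt n%:R; set G := g 0 i - g 0 j.
have key s : `|s| = 1 -> s * t * (G - c) <= eta + e * N * t.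
  move=> s1; have [qs qn] := q_simplex p0 m t s i j hp0 hm t0 tm s1.
  have := hd _ qs (le_lt_trans qn td).
  have -> : \sum_k g 0 k * ((p0 + (s * t) *: dv i j) 0 k - p0 0 k) = s * t * G.
    rewrite /G -(sum_dv (fun k => g 0 k) i j) mulr_sumr; apply: eq_bigr => k _.
    by rewrite !mxE addrC addKr mulrCA.
  rewrite ler_norml => /andP[h1 _].
  have h2 : e * enorm (p0 + (s * t) *: dv i j - p0) <= e * (N * t).
    exact: ler_wpM2l.
  have := hs s s1; rewrite mulrA in h2; lra.
have k1 := key 1 (normr1 _).
have k2 := key (-1) (ltac:(by rewrite normrN normr1)).
have N0 : 0 <= N by rewrite sqrtr_ge0.
rewrite -(ler_pM2l t0) mulrDr mulrCA divff ?gt_eqF // mulr1.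
have -> : t * `|c - G| = `|t * (G - c)|.
  by rewrite normrM ger0_norm ?(ltW t0) // distrC.
rewrite ler_norml; apply/andP; split; rewrite mulrBr; nra.
Qed.


Lemma combine (a b p0 : 'rV[R]_n) beta : simplex p0 -> csimplex a -> csimplex b ->
  0 <= beta ->
  (forall i j, `|(a 0 i / p0 0 i - a 0 j / p0 0 j) - (b 0 i / p0 0 i - b 0 j / p0 0 j)| <= beta) ->
  enorm (a - b) <= Num.sqrt n%:R * beta.
Proof.
move=> [hp hs] [_ ha] [_ hb] b0 H; apply: enorm_le => // i.
pose d k := (a 0 k - b 0 k) / p0 0 k.
have pk k : 0 < p0 0 k by case/andP: (hp k).
have hd k : p0 0 k * d k = a 0 k - b 0 k.
  by rewrite /d mulrCA divff ?mulr1 // gt_eqF.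
have hij j : `|d i - d j| <= beta.
  by have := H i j; rewrite /d !mulrBl; congr (`|_| <= _); ring.
have s0 : \sum_k p0 0 k * d k = 0.
  under eq_bigr do rewrite hd.
  by rewrite sumrB ha hb subrr.
have e1 : d i = \sum_j p0 0 j * (d i - d j).
  under eq_bigr do rewrite mulrBr.
  by rewrite sumrB s0 subr0 -mulr_suml hs mul1r.
have bd : `|d i| <= beta.
  rewrite e1; apply: le_trans (ler_norm_sum _ _ _) _.
  rewrite -[X in _ <= X]mul1r -hs mulr_suml; apply: ler_sum => j _.
  by rewrite normrM ger0_norm ?(ltW (pk j)) // ler_wpM2l ?(ltW (pk j)).
rewrite mxE [X in `|_ + X|]mxE -hd normrM ger0_norm ?(ltW (pk i)) //.
apply: le_trans bd; rewrite -[X in _ <= X]mul1r ler_wpM2r ?normr_ge0 //.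
by case/andP: (hp i) => _ /ltW.
Qed.


Lemma exists_m (p0 : 'rV[R]_n) : simplex p0 ->
  exists m : R, 0 < m /\ forall k, m <= p0 0 k /\ m <= 1 - p0 0 k.
Proof.
move=> [hp _].
exists (\big[Order.min/1]_k Order.min (p0 0 k) (1 - p0 0 k)); split.
  apply: lt_bigmin => // k _; rewrite lt_min; case/andP: (hp k) => h1 h2.
  by rewrite h1 subr_gt0 h2.
move=> k; have := bigmin_le 1 k (fun k => Order.min (p0 0 k) (1 - p0 0 k)).
by rewrite le_min => /andP[].
Qed.

End H.

Theorem lemma4p7 (R : realType) (n : nat) (hn : (2 <= n)%N)
  (pi0 : 'rV[R]_n -> 'rV[R]_n) (Phi0 : 'rV[R]_n -> R)
  (hgen0 : generated_by pi0 Phi0)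
  (p0 : 'rV[R]_n) (hp0 : simplex p0)
  (hdiff : differentiable_on_simplex_at Phi0 p0)
  (eps : R) (heps : 0 < eps)
  (K : set 'rV[R]_n) (hK : compact_nbhs_in_simplex K p0) :
  exists delta : R, 0 < delta /\
    forall (pi : 'rV[R]_n -> 'rV[R]_n) (Phi : 'rV[R]_n -> R),
      generated_by pi Phi ->
      (forall p, K p -> `|Phi p - Phi0 p| < delta) ->
      (* sup_{p in Delta_n, |p - p0| < delta} |pi p - pi0 p0| < eps *)
      exists c : R, c < eps /\
        forall p, simplex p -> enorm (p - p0) < delta ->
          enorm (pi p - pi0 p0) <= c.
Proof.
move: hgen0 => [Phi0pos _ pi0cs hsg0].
case: hdiff => g hg.
case: hK => hKs _ [r [r0 hr]].
have [m [m0 hm]] := exists_m p0 hp0.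
pose P0 := Phi0 p0; have P00 : 0 < P0 := Phi0pos _ hp0.
pose N := Num.sqrt (n%:R : R).
have N0 : 0 < N by rewrite sqrtr_gt0 ltr0n; apply: leq_trans hn.
pose e := eps * P0 / (8 * (N * N)).
have e0 : 0 < e by rewrite divr_gt0 ?mulr_gt0.
have [d [d0 hd]] := hg e e0.
have [d1 [d10 hd1]] := hg 1 ltr01.
pose u := Order.min m (Order.min (d / N) (r / N)).
have u0 : 0 < u by rewrite !lt_min m0 !divr_gt0.
have um : u <= m by rewrite ge_min lexx.
have ud : N * u <= d.
  by rewrite -ler_pdivlMl // mulrC; rewrite !ge_min lexx orbT.
have ur : N * u <= r.
  by rewrite -ler_pdivlMl // mulrC; rewrite !ge_min lexx !orbT.
pose t := u / 2.
have t0 : 0 < t by rewrite divr_gt0.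
have tm : t < m by rewrite /t; lra.
have td : N * t < d by rewrite /t; nra.
have tr : N * t < r by rewrite /t; nra.
pose G1 := \sum_k `|g 0 k| + 1.
have G10 : 0 < G1 by rewrite /G1 ltr_pwDr ?ltr01 // sumr_ge0 // => k _; exact: normr_ge0.
pose E0 := (n%:R : R) * (2 / (m * m)).
pose Smax := (n%:R : R) * (2 / m).
have E00 : 0 <= E0 by rewrite mulr_ge0 ?ler0n // divr_ge0 // ltW // mulr_gt0.
have Smax0 : 0 <= Smax by rewrite mulr_ge0 ?ler0n // divr_ge0 // ltW.
pose C := P0 * E0 + (G1 + 1) * Smax + 1.
have C0 : 0 < C.
  have : 0 <= P0 * E0 by rewrite mulr_ge0 // ltW.
  have : 0 <= (G1 + 1) * Smax by rewrite mulr_ge0 // addr_ge0 // ltW.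
  rewrite /C; lra.
pose del := Order.min (Order.min r d1) (Order.min (m / 2) (eps * P0 * t / (4 * N * C))).
have del0 : 0 < del by rewrite !lt_min r0 d10 !divr_gt0 ?mulr_gt0.
have delr : del <= r by rewrite !ge_min lexx.
have deld1 : del <= d1 by rewrite !ge_min lexx !orbT.
have delm : del <= m / 2 by rewrite !ge_min lexx !orbT.
have dele : del <= eps * P0 * t / (4 * N * C) by rewrite !ge_min lexx !orbT.
exists del; split => // pi Phi [Phipos _ pics hsg] hclose.
pose beta := (C * del / t + 2 * e * N) / P0.
have beta0 : 0 <= beta.
  apply: divr_ge0; last exact: ltW.
  apply: addr_ge0; first by apply: divr_ge0; [apply: mulr_ge0|]; apply: ltW.
  by apply: mulr_ge0; [apply: mulr_ge0|]; apply: ltW => //; rewrite ltr0n.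
exists (N * beta); split.
  have -> : N * beta = (N * C * del) / (t * P0) + eps / 4.
    rewrite /beta /e; field.
    by rewrite !mulf_neq0 ?gt_eqF.
  have h1 : (N * C * del) / (t * P0) <= eps / 4.
    rewrite ler_pdivrMr ?mulr_gt0 //.
    move: dele; rewrite ler_pdivlMr ?mulr_gt0 // => h; nra.
  lra.
move=> p hp hpd.
have pK : K p by apply: hr => //; apply: lt_le_trans hpd delr.
have hpk k : `|p 0 k - p0 0 k| < del.
  apply: le_lt_trans hpd; have := comp_le_enorm (p - p0) k.
  by rewrite !mxE.
have p0k k : 0 < p0 0 k by case: hp0 => /(_ k) /andP[].
have pk k : m / 2 <= p 0 k.
  have := hpk k; rewrite ltr_norml => /andP[h1 _].
  have [h3 _] := hm k; lra.
have pkp k : 0 < p 0 k by case: hp => /(_ k) /andP[].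
have PhiP : Phi p <= P0 + (G1 + 1) * del.
  have := hclose p pK; rewrite ltr_norml => /andP[_ h1].
  have := hd1 p hp (lt_le_trans hpd deld1).
  rewrite mul1r ler_norml => /andP[_ h2].
  have h3 : \sum_k g 0 k * (p 0 k - p0 0 k) <= (\sum_k `|g 0 k|) * del.
    rewrite mulr_suml; apply: le_trans (ler_norm _) _.
    apply: le_trans (ler_norm_sum _ _ _) _.
    apply: ler_sum => k _; rewrite normrM ler_wpM2l ?normr_ge0 //.
    exact: ltW.
  rewrite /G1 /P0; lra.
apply: (@combine _ _ _ _ _ _ hp0 (pics p hp) (pi0cs p0 hp0) beta0) => i j.
pose A := pi p 0 i / p0 0 i - pi p 0 j / p0 0 j.
pose B := pi0 p0 0 i / p0 0 i - pi0 p0 0 j / p0 0 j.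
change (`|A - B| <= beta).
have [pia pisum] := pics p hp.
have [pi0a pi0sum] := pi0cs p0 hp0.
have shiftE (w : 'rV[R]_n) (q : 'rV[R]_n) s : \sum_k w 0 k = 1 ->
    q = p0 + (s * t) *: dv i j ->
    \sum_k w 0 k * (q 0 k / p0 0 k) =
    1 + s * t * (w 0 i / p0 0 i - w 0 j / p0 0 j).
  move=> ws ->.
  transitivity (\sum_k (w 0 k / p0 0 k) * (p0 + (s * t) *: dv i j) 0 k).
    by apply: eq_bigr => k _; rewrite mulrA mulrAC.
  rewrite (@sum_shift _ _ (fun k => w 0 k / p0 0 k)); congr (_ + _).
  by rewrite -ws; apply: eq_bigr => k _; rewrite divfK // gt_eqF.
have hB := @squeeze _ _ Phi0 p0 g e d m t (P0 * B) 0 i j hp0 hm t0 tm td (ltW e0) hd.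
have hB' : `|P0 * B - (g 0 i - g 0 j)| <= 0 / t + e * N.
  apply: hB => s s1.
  have [hq _] := @q_simplex _ _ p0 m t s i j hp0 hm t0 tm s1.
  have := hsg0 p0 _ hp0 hq.
  rewrite (shiftE (pi0 p0) _ s pi0sum erefl) ler_pdivrMr // => h.
  rewrite /P0 /B in h *; lra.
have hA := @squeeze _ _ Phi0 p0 g e d m t (P0 * A) (C * del) i j hp0 hm t0 tm td (ltW e0) hd.
have hA' : `|P0 * A - (g 0 i - g 0 j)| <= C * del / t + e * N.
  apply: hA => s s1.
  have [hq hqn] := @q_simplex _ _ p0 m t s i j hp0 hm t0 tm s1.
  set q := p0 + (s * t) *: dv i j in hq hqn *.
  have qK : K q by apply: hr => //; apply: le_lt_trans hqn tr.
  have h1 : Phi0 q <= Phi q + del.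
    by have := hclose q qK; rewrite ltr_norml => /andP[h _]; lra.
  pose S := \sum_k pi p 0 k * (q 0 k / p 0 k).
  have h2 : Phi q <= S * Phi p.
    by have := hsg p q hp hq; rewrite ler_pdivrMr // Phipos.
  have qk k : 0 < q 0 k /\ q 0 k <= 1.
    by case: hq => /(_ k) /andP[h3 h4] _; split => //; apply: ltW.
  have S0 : 0 <= S.
    apply: sumr_ge0 => k _; have [h3 _] := qk k; have /andP[h4 _] := pia k.
    by rewrite mulr_ge0 // divr_ge0 // ltW.
  have hSmax : S <= Smax.
    have -> : Smax = \sum_(k < n) (2 / m) by rewrite /Smax sumr_const card_ord mulr_natl.
    apply: ler_sum => k _; have [h3 h4] := qk k; have /andP[h5 h6] := pia k.
    rewrite -[2 / m]mul1r; apply: ler_pM => //; first by rewrite divr_ge0 // ltW.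
    rewrite ler_pdivrMr //; apply: (le_trans h4).
    have e1 : 2 / m * (m / 2) = 1 :> R by field; rewrite gt_eqF.
    have : 2 / m * (m / 2) <= 2 / m * p 0 k.
      by rewrite ler_wpM2l // divr_ge0 // ltW.
    lra.
  have hSE : S <= 1 + s * t * A + E0 * del.
    rewrite -(shiftE (pi p) q s pisum erefl).
    have -> : E0 * del = \sum_(k < n) (2 / (m * m) * del).
      by rewrite sumr_const card_ord /E0 -mulrA mulr_natl.
    rewrite /S -big_split; apply: ler_sum => k _ /=.
    have [h3 h4] := qk k; have /andP[h5 h6] := pia k.
    have hpk1 := pkp k; have hp0k := p0k k.
    pose Z := (p0 0 k - p 0 k) / (p 0 k * p0 0 k).
    have z : pi p 0 k * (q 0 k / p 0 k) - pi p 0 k * (q 0 k / p0 0 k)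
        = (pi p 0 k * q 0 k) * Z.
      by rewrite /Z; field; rewrite !gt_eqF.
    have aq0 : 0 <= pi p 0 k * q 0 k by rewrite mulr_ge0 // ltW.
    have aq1 : pi p 0 k * q 0 k <= 1 by rewrite -[1]mulr1 ler_pM // ltW.
    have hz : (pi p 0 k * q 0 k) * Z <= `|Z|.
      apply: (le_trans (ler_wpM2l aq0 (ler_norm Z))).
      by rewrite -[X in _ <= X]mul1r ler_wpM2r // normr_ge0.
    have hZ : `|Z| <= 2 / (m * m) * del.
      rewrite /Z normrM normfV (ger0_norm (ltW (mulr_gt0 hpk1 hp0k))).
      rewrite ler_pdivrMr ?mulr_gt0 //.
      have hpp : m / 2 * m <= p 0 k * p0 0 k.
        by apply: ler_pM => //; [rewrite divr_ge0 // ltW | apply: ltW | case: (hm k)].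
      have e2 : 2 / (m * m) * del * (m / 2 * m) = del by field; rewrite gt_eqF.
      have : 2 / (m * m) * del * (m / 2 * m) <= 2 / (m * m) * del * (p 0 k * p0 0 k).
        by rewrite ler_wpM2l // mulr_ge0 // ?divr_ge0 // ltW // mulr_gt0.
      have := hpk k; rewrite distrC; lra.
    lra.
  have f1 : S * Phi p <= S * (P0 + (G1 + 1) * del) by apply: ler_wpM2l.
  have f2 : S * P0 <= (1 + s * t * A + E0 * del) * P0 by apply: ler_wpM2r => //; apply: ltW.
  have f3 : S * ((G1 + 1) * del) <= Smax * ((G1 + 1) * del).
    by apply: ler_wpM2r => //; apply: mulr_ge0; apply: ltW => //; lra.
  rewrite /C /P0 in f1 f2 *; lra.
rewrite mul0r add0r in hB'.
rewrite /beta ler_pdivlMr // -[X in _ * X](ger0_norm (ltW P00)) -normrM.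
move: hA' hB'; rewrite !ler_norml => /andP[a1 a2] /andP[b1 b2].
apply/andP; split; lra.
Qed.
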